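(* Let $\mathcal{X}\subseteq\mathbb{R}^d$ be convex and compact, $f:\mathcal{X}\to\mathbb{R}$ convex and differentiable, $\epsilon,\delta>0$. Let $(A_k)_{k\ge0}$ be a nondecreasing sequence of positive numbers, $\tau_k=(A_{k+1}-A_k)/A_{k+1}$, let $x_0\in\mathcal{X}$, and for $k\ge0$ let $$z_k\in\arg\min_{z\in\mathcal{X}}\langle\nabla f(x_k),z\rangle,\qquad x_{k+1}=\tau_kz_k+(1-\tau_k)x_k.$$ For $x\in\mathcal{X}$ let $E_k=A_k\big(f(x_k)-f(x)\big)$. If $\nabla f$ is $(1/\epsilon)$-Lipschitz on $\mathcal{X}$, then for every $x\in\mathcal{X}$ and every $k$, $$\frac{E_{k+1}-E_k}{\delta}\le\frac{A_{k+1}\tau_k^2}{2\epsilon\delta}\|z_k-x_k\|^2.$$ If instead, for some $\nu\in(0,1]$, $\|\nabla f(x)-\nabla f(y)\|\le\frac1\epsilon\|x-y\|^\nu$ for all $x,y\in\mathcal{X}$, then for every $x\in\mathcal{X}$ and every $k$, $$\frac{E_{k+1}-E_k}{\delta}\le\frac{A_{k+1}\tau_k^{1+\nu}}{(1+\nu)\epsilon\delta}\|z_k-x_k\|^{1+\nu}.$$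
   Context: $\|\cdot\|$ is the Euclidean norm. *)

(* Defs.v *)
From HB Require Import structures.
From mathcomp Require Import all_boot all_order all_algebra.
From mathcomp Require Import all_classical all_reals all_analysis.
Set Implicit Arguments. Unset Strict Implicit. Unset Printing Implicit Defensive.
Import Order.TTheory GRing.Theory Num.Theory.
Import numFieldNormedType.Exports.
Local Open Scope classical_set_scope.
Local Open Scope ring_scope.

Definition inner {R : realType} {d : nat} (u v : 'rV[R]_d) : R :=
  \sum_(i < d) u 0 i * v 0 i.
Definition enorm {R : realType} {d : nat} (v : 'rV[R]_d) : R :=
  Num.sqrt (\sum_(i < d) v 0 i ^+ 2).

Definition grad {R : realType} {d : nat} (f : 'rV[R]_d -> R) (x : 'rV[R]_d)
  : 'rV[R]_d := \row_(i < d) ('D_(delta_mx 0 i) f x).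

Definition convex_on {R : realType} {d : nat} (X : set 'rV[R]_d)
  (f : 'rV[R]_d -> R) : Prop :=
  forall x y t, X x -> X y -> 0 <= t <= 1 ->
    f (t *: x + (1 - t) *: y) <= t * f x + (1 - t) * f y.

(* Main.v *)
Require Import Defs.
From HB Require Import structures.
From mathcomp Require Import all_boot all_order all_algebra.
From mathcomp Require Import all_classical all_reals all_analysis.
From mathcomp Require Import ring lra.
Import Order.TTheory GRing.Theory Num.Theory.
Import numFieldNormedType.Exports.
Local Open Scope classical_set_scope.
Local Open Scope ring_scope.

Section H.
Context {R : realType} {d : nat}.
Implicit Types (u v h : 'rV[R]_d).

Lemma cvxP (X : set 'rV[R]_d) u v t : convex_set X -> X u -> X v -> 0 <= t <= 1 ->
  X (t *: u + (1 - t) *: v).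
Proof.
move=> cX Xu Xv /andP[t0 t1].
have := cX u v (Itv01 t0 t1).
rewrite !inE => /(_ Xu Xv). done.
Qed.

Lemma dirder f y h : differentiable f y -> 'D_h f y = inner (grad f y) h.
Proof.
move=> df; rewrite deriveE //.
rewrite {1}(row_sum_delta h) linear_sum /inner.
apply: eq_bigr => i _; rewrite linearZ /= mxE -deriveE // mulrC.
by [].
Qed.

Lemma line_derive (f : 'rV[R]_d -> R) x h t : differentiable f (x + t *: h) ->
  is_derive t 1 (fun s : R => f (x + s *: h)) ('D_h f (x + t *: h)).
Proof.
move=> df.
have E : (fun e : R => e^-1 *: (((fun s : R => f (x + s *: h)) \o shift t) (e *: 1) - f (x + t *: h)))
  = (fun e : R => e^-1 *: ((f \o shift (x + t *: h)) (e *: h) - f (x + t *: h))).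
  apply/funext => e /=; congr (_ *: (f _ - _)).
  rewrite (_ : e%:A = e); last by rewrite [LHS]mulr1.
  by rewrite scalerDl addrCA addrA.
have H : derivable (fun s : R => f (x + s *: h)) t 1.
  by rewrite /derivable E; exact: diff_derivable.
have -> : 'D_h f (x + t *: h) = 'D_1 (fun s : R => f (x + s *: h)) t.
  by rewrite /derive /= E.
exact: derivableP.
Qed.


Lemma enorm_ge0 h : 0 <= enorm h.
Proof. exact: sqrtr_ge0. Qed.

Lemma enormZ (t : R) h : enorm (t *: h) = `|t| * enorm h.
Proof.
rewrite /enorm -sqrtr_sqr -sqrtrM ?sqr_ge0 // mulr_sumr.
by congr Num.sqrt; apply: eq_bigr => i _; rewrite mxE exprMn.
Qed.

Lemma cs_sq u v : inner u v ^+ 2 <= (\sum_(i < d) u 0 i ^+ 2) * (\sum_(i < d) v 0 i ^+ 2).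
Proof.
set a := \sum_(i < d) u 0 i ^+ 2; set b := \sum_(i < d) v 0 i ^+ 2; set c := inner u v.
have key : \sum_(i < d) \sum_(j < d) (u 0 i * v 0 j - u 0 j * v 0 i) ^+ 2
    = (a * b - c ^+ 2) *+ 2.
  transitivity (\sum_(i < d) \sum_(j < d) (u 0 i ^+ 2 * v 0 j ^+ 2
     + u 0 j ^+ 2 * v 0 i ^+ 2 - ((u 0 i * v 0 i) * (u 0 j * v 0 j)) *+ 2)).
    by apply: eq_bigr => i _; apply: eq_bigr => j _; ring.
  have e1 : \sum_(i < d) \sum_(j < d) u 0 i ^+ 2 * v 0 j ^+ 2 = a * b.
    by rewrite /a big_distrl; apply: eq_bigr => i _; rewrite /b big_distrr.
  have e2 : \sum_(i < d) \sum_(j < d) u 0 j ^+ 2 * v 0 i ^+ 2 = a * b.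
    by rewrite /b big_distrr; apply: eq_bigr => i _; rewrite /a big_distrl.
  have e3 : \sum_(i < d) \sum_(j < d) (u 0 i * v 0 i) * (u 0 j * v 0 j) = c ^+ 2.
    by rewrite expr2 /c /inner big_distrl; apply: eq_bigr => i _; rewrite big_distrr.
  have -> : \sum_(i < d) \sum_(j < d) (u 0 i ^+ 2 * v 0 j ^+ 2
     + u 0 j ^+ 2 * v 0 i ^+ 2 - ((u 0 i * v 0 i) * (u 0 j * v 0 j)) *+ 2)
     = \sum_(i < d) \sum_(j < d) u 0 i ^+ 2 * v 0 j ^+ 2
       + \sum_(i < d) \sum_(j < d) u 0 j ^+ 2 * v 0 i ^+ 2
       - (\sum_(i < d) \sum_(j < d) (u 0 i * v 0 i) * (u 0 j * v 0 j)) *+ 2.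
    rewrite -sumrMnl -big_split -sumrB; apply: eq_bigr => i _.
    by rewrite -sumrMnl -big_split -sumrB.
  rewrite e1 e2 e3; ring.
have : 0 <= (a * b - c ^+ 2) *+ 2.
  by rewrite -key; apply: sumr_ge0 => i _; apply: sumr_ge0 => j _; exact: sqr_ge0.
rewrite pmulrn_lge0 // subr_ge0 //.
Qed.

Lemma cs u v : inner u v <= enorm u * enorm v.
Proof.
have [c0|c0] := leP (inner u v) 0.
  by apply: le_trans c0 _; apply: mulr_ge0; exact: enorm_ge0.
rewrite /enorm -sqrtrM; last by apply: sumr_ge0 => i _; exact: sqr_ge0.
rewrite -(ger0_norm (ltW c0)) -sqrtr_sqr ler_sqrt; first exact: cs_sq.
by apply: mulr_ge0; apply: sumr_ge0 => i _; exact: sqr_ge0.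
Qed.

Lemma cvx_grad (X : set 'rV[R]_d) (f : 'rV[R]_d -> R) x y :
  convex_set X -> convex_on X f -> X x -> X y -> differentiable f x ->
  inner (grad f x) (y - x) <= f y - f x.
Proof.
move=> cX fX Xx Xy df; rewrite -dirder //.
have dv : derivable f x (y - x) by exact: diff_derivable.
have sub : (0:R)^'+ `=>` (0:R)^'.
  move=> A; rewrite /at_right /dnbhs /within /=.
  by apply: filterS => e H e0; apply: H; rewrite gt_eqF.
set q := (fun h : R => h^-1 *: ((f \o shift x) (h *: (y - x)) - f x)).
have : q @ 0^'+ --> 'D_(y - x) f x.
  apply: cvg_trans dv; exact: cvg_app.
move=> /cvgr_to_le; apply.
near=> e => /=.
have e0 : 0 < e by near: e; exact: nbhs_right_gt.
have e1 : e <= 1 by near: e; exact: nbhs_right_le.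
rewrite /q /=.
have -> : e *: (y - x) + x = e *: y + (1 - e) *: x.
  by rewrite scalerBr scalerBl scale1r -addrA [- _ + x]addrC.
have := fX y x e Xy Xx; rewrite (ltW e0) e1 => /(_ isT) H.
rewrite /GRing.scale /= ler_pdivrMl //.
rewrite lerBlDr; apply: le_trans H _; lra.
Unshelve. all: end_near.
Qed.


Lemma innerBl u v w : inner (u - v) w = inner u w - inner v w.
Proof. by rewrite /inner -sumrB; apply: eq_bigr => i _; rewrite !mxE mulrBl. Qed.

Lemma descent (X : set 'rV[R]_d) (f : 'rV[R]_d -> R) x h (nu L : R) :
  convex_set X -> (forall y, X y -> differentiable f y) -> X x -> X (x + h) ->
  0 < nu <= 1 ->
  (forall u v, X u -> X v -> enorm (grad f u - grad f v) <= L * powR (enorm (u - v)) nu) ->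
  f (x + h) <= f x + inner (grad f x) h + L / (1 + nu) * powR (enorm h) (1 + nu).
Proof.
move=> cX dF Xx Xxh /andP[nu0 nu1] HL.
set e := enorm h; set c0 := inner (grad f x) h; set p := 1 + nu.
set K := L / p * powR e p.
have Xt : forall t : R, 0 <= t <= 1 -> X (x + t *: h).
  move=> t t01; have H := cvxP _ _ _ _ cX Xxh Xx t01.
  by rewrite scalerDr scalerBl scale1r addrC addrA subrK in H.
set g := fun s : R => f (x + s *: h).
set phi := g - c0 \*: (@id R) - K \*: (@powR R ^~ p).
have phiE t : phi t = g t - c0 * t - K * powR t p.
  rewrite /phi /=. reflexivity.
have p_gt0 : 0 < p by rewrite /p; lra.
have p0 : p != 0 by exact: lt0r_neq0.
have der : forall t : R, 0 < t <= 1 ->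
   is_derive t 1 phi ('D_h f (x + t *: h) - c0 *: 1 - K *: (p * t `^ (p - 1))).
  move=> t /andP[t0 t1].
  have Xt' : X (x + t *: h) by apply: Xt; rewrite (ltW t0) t1.
  have Hg := line_derive f x h t (dF _ Xt').
  rewrite /phi; apply: is_deriveB.
  by apply: is_deriveZ; exact: is_derive1_powR.
have cont : forall t : R, 0 < t <= 1 -> {for t, continuous phi}.
  move=> t t01; apply/differentiable_continuous/derivable1_diffP.
  by case: (der t t01) => H _.
have [c c01 Hc] : exists2 c, c \in `]0, 1[ & phi 1 - phi 0 = 
   ('D_h f (x + c *: h) - c0 *: 1 - K *: (p * c `^ (p - 1))) * (1 - 0).
  apply: (MVT (f := phi) (df := fun t => 'D_h f (x + t *: h) - c0 *: 1 - K *: (p * t `^ (p - 1)))).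
  - exact: ltr01.
  - move=> t; rewrite in_itv /= => /andP[t0 t1]; apply: der.
    by rewrite t0 ltW.
  - apply/continuous_within_itvP; first exact: ltr01.
    split.
    + move=> t; rewrite in_itv /= => /andP[t0 t1]; apply: cont.
      by rewrite t0 ltW.
    + have -> : phi 0 = g 0 - c0 *: (0:R) - K *: (0:R).
        by rewrite phiE powR0.
      rewrite /phi; apply: cvgB; first apply: cvgB.
      * apply: cvg_at_right_filter.
        have X0 : X (x + 0 *: h) by apply: Xt; rewrite lexx ler01.
        apply/differentiable_continuous/derivable1_diffP.
        by case: (line_derive f x h 0 (dF _ X0)).
      * apply: cvg_at_right_filter.
        apply/differentiable_continuous/derivable1_diffP.
        have : is_derive (0:R) 1 (c0 \*: (@id R)) (c0 *: 1).
          by apply: is_deriveZ; exact: is_derive_id.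
        by case.
      * apply: cvgZl_tmp; exact: powR_cvg0.
    + apply: cvg_at_left_filter; apply: cont; by rewrite ltr01 lexx.
have dle : 'D_h f (x + c *: h) - c0 *: 1 - K *: (p * c `^ (p - 1)) <= 0.
  move: c01; rewrite in_itv /= => /andP[c_gt0 c_lt1].
  have Xc : X (x + c *: h) by apply: Xt; rewrite !ltW.
  rewrite dirder; last exact: dF.
  have -> : c0 *: (1:R) = c0 by rewrite [LHS]mulr1.
  rewrite /c0 -innerBl subr_le0.
  have Hg := HL _ _ Xc Xx.
  rewrite (_ : x + c *: h - x = c *: h) in Hg; last by rewrite addrC addKr.
  rewrite enormZ ger0_norm ?(ltW c_gt0) // powRM ?(ltW c_gt0) ?enorm_ge0 // in Hg.
  apply: le_trans (cs _ _) _.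
  apply: le_trans (ler_wpM2r (enorm_ge0 h) Hg) _.
  have -> : p - 1 = nu by rewrite /p addrAC subrr add0r.
  have ep : e `^ p = e * e `^ nu.
    by rewrite /p powRD ?(negbTE p0) // powRr1 // enorm_ge0.
  rewrite /K ep /e.
  change (L * (c `^ nu * enorm h `^ nu) * enorm h <=
    (L / p * (enorm h * enorm h `^ nu)) * (p * c `^ nu)).
  rewrite le_eqVlt; apply/orP; left; apply/eqP; field.
  exact: p0.
have : phi 1 - phi 0 <= 0 by rewrite Hc subr0 mulr1.
rewrite !phiE powR0 // powR1 /g scale1r scale0r addr0 !mulr0 !mulr1.
lra.
Qed.

Lemma innerBr u v w : inner w (u - v) = inner w u - inner w v.
Proof. by rewrite /inner -sumrB; apply: eq_bigr => i _; rewrite !mxE mulrBr. Qed.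

Lemma innerZr (t : R) v w : inner w (t *: v) = t * inner w v.
Proof.
rewrite /inner mulr_sumr; apply: eq_bigr => i _; rewrite !mxE; ring.
Qed.

End H.

Lemma step (R : realType) (d : nat) (X : set 'rV[R]_d)
  (f : 'rV[R]_d -> R) (eps delta : R) (A : nat -> R)
  (x z : nat -> 'rV[R]_d) :
  convex_set X ->
  convex_on X f -> (forall y, X y -> differentiable f y) ->
  0 < eps -> 0 < delta ->
  (forall k, 0 < A k) -> (forall k, A k <= A k.+1) ->
  X (x 0%N) ->
  (forall k, X (z k) /\
     (forall w, X w -> inner (grad f (x k)) (z k) <= inner (grad f (x k)) w)) ->
  (forall k, x k.+1 = ((A k.+1 - A k) / A k.+1) *: z k
                      + (1 - (A k.+1 - A k) / A k.+1) *: x k) ->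
  forall nu, 0 < nu <= 1 ->
    (forall u v, X u -> X v ->
      enorm (grad f u - grad f v) <= eps^-1 * powR (enorm (u - v)) nu) ->
    forall y k, X y ->
      (A k.+1 * (f (x k.+1) - f y) - A k * (f (x k) - f y)) / delta
      <= A k.+1 * powR ((A k.+1 - A k) / A k.+1) (1 + nu) / ((1 + nu) * eps * delta)
         * powR (enorm (z k - x k)) (1 + nu).
Proof.
move=> cX fX dF eps0 delta0 A0 Amono X0 Hz Hx nu nu01 HL y k Xy.
have tau01 : forall k, 0 <= (A k.+1 - A k) / A k.+1 <= 1.
  move=> j; have a0 := A0 j; have a1 := A0 j.+1; have m := Amono j.
  apply/andP; split.
    by apply: divr_ge0; [rewrite subr_ge0 | exact: ltW].
  by rewrite ler_pdivrMr // mul1r lerBlDr lerDl ltW.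
have Xk : forall j, X (x j).
  elim=> [//|j IH]; rewrite Hx; apply: cvxP => //; try exact: (Hz j).1; try exact: tau01.
set t := (A k.+1 - A k) / A k.+1.
have hx1 : x k.+1 = x k + t *: (z k - x k).
  by rewrite Hx scalerBr scalerBl scale1r addrCA.
have [Xz zopt] := Hz k.
have Xx1 : X (x k + t *: (z k - x k)) by rewrite -hx1.
have H1 := descent X f (x k) (t *: (z k - x k)) nu (eps^-1) cX dF (Xk k) Xx1 nu01 HL.
have /andP[t0 t1] := tau01 k.
rewrite -hx1 enormZ (ger0_norm t0) powRM ?enorm_ge0 // in H1.
rewrite innerZr innerBr in H1.
have H2 := cvx_grad X f (x k) y cX fX (Xk k) Xy (dF _ (Xk k)).
rewrite innerBr in H2.
have H3 := zopt y Xy.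
have a0 := A0 k; have a1 := A0 k.+1.
have Et : A k.+1 - A k = A k.+1 * t by rewrite /t mulrC divfK // lt0r_neq0.
move: H1 H2 H3 Et t0; rewrite -/t.
set T := t `^ (1 + nu); set P := enorm (z k - x k) `^ (1 + nu).
set gz := inner _ (z k); set gx := inner _ (x k); set gy := inner _ y.
set Q := eps^-1 / (1 + nu) * (T * P).
move=> H1 H2 H3 Et t0.
have -> : A k.+1 * T / ((1 + nu) * eps * delta) * P = (A k.+1 * Q) / delta.
  rewrite /Q; field; apply/and3P; split; apply: lt0r_neq0 => //; lra.
apply: ler_wpM2r; first by rewrite invr_ge0 ltW.
have at0 : 0 <= A k.+1 * t by apply: mulr_ge0 => //; exact: ltW.
have K1 : A k.+1 * (f (x k.+1) - f (x k)) <= A k.+1 * (t * (gz - gx) + Q).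
  by apply: ler_wpM2l; [exact: ltW | lra].
have K2 : (A k.+1 * t) * (f (x k) - f y) <= (A k.+1 * t) * (gx - gy).
  by apply: ler_wpM2l => //; lra.
have K3 : (A k.+1 * t) * (gz - gy) <= 0.
  by apply: mulr_ge0_le0 => //; lra.
have -> : A k.+1 * (f (x k.+1) - f y) - A k * (f (x k) - f y)
   = A k.+1 * (f (x k.+1) - f (x k)) + (A k.+1 - A k) * (f (x k) - f y) by ring.
rewrite Et.
have E1 : A k.+1 * (t * (gz - gx) + Q) = (A k.+1 * t) * (gz - gx) + A k.+1 * Q by ring.
have E2 : (A k.+1 * t) * (gx - gy) = (A k.+1 * t) * (gz - gy) - (A k.+1 * t) * (gz - gx) by ring.
rewrite E1 in K1; rewrite E2 in K2.
lra.
Qed.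


Theorem proposition10 (R : realType) (d : nat) (X : set 'rV[R]_d)
  (f : 'rV[R]_d -> R) (eps delta : R) (A : nat -> R)
  (x z : nat -> 'rV[R]_d) :
  convex_set X -> compact X ->
  convex_on X f -> (forall y, X y -> differentiable f y) ->
  0 < eps -> 0 < delta ->
  (forall k, 0 < A k) -> (forall k, A k <= A k.+1) ->
  X (x 0%N) ->
  (forall k, X (z k) /\
     (forall w, X w -> inner (grad f (x k)) (z k) <= inner (grad f (x k)) w)) ->
  (forall k, x k.+1 = ((A k.+1 - A k) / A k.+1) *: z k
                      + (1 - (A k.+1 - A k) / A k.+1) *: x k) ->
  ((forall u v, X u -> X v ->
      enorm (grad f u - grad f v) <= eps^-1 * enorm (u - v)) ->
    forall y k, X y ->
      (A k.+1 * (f (x k.+1) - f y) - A k * (f (x k) - f y)) / delta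
      <= A k.+1 * ((A k.+1 - A k) / A k.+1) ^+ 2 / (2 * eps * delta)
         * enorm (z k - x k) ^+ 2)
  /\
  (forall nu, 0 < nu <= 1 ->
    (forall u v, X u -> X v ->
      enorm (grad f u - grad f v) <= eps^-1 * powR (enorm (u - v)) nu) ->
    forall y k, X y ->
      (A k.+1 * (f (x k.+1) - f y) - A k * (f (x k) - f y)) / delta
      <= A k.+1 * powR ((A k.+1 - A k) / A k.+1) (1 + nu) / ((1 + nu) * eps * delta)
         * powR (enorm (z k - x k)) (1 + nu)).

Proof.
move=> cX _ fX dF eps0 delta0 A0 Amono X0 Hz Hx; split; last first.
  by move=> nu nu01 HL y k Xy; exact: (step _ _ _ _ _ _ _ _ _ cX fX dF eps0 delta0 A0 Amono X0 Hz Hx nu nu01 HL y k Xy).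
move=> HL y k Xy.
have HL1 : forall u v, X u -> X v ->
    enorm (grad f u - grad f v) <= eps^-1 * powR (enorm (u - v)) 1.
  by move=> u v Xu Xv; rewrite powRr1 ?enorm_ge0 //; exact: HL.
have n01 : 0 < (1:R) <= (1:R) by apply/andP; split; [exact: ltr01 | exact: lexx].
have := step _ _ _ _ _ _ _ _ _ cX fX dF eps0 delta0 A0 Amono X0 Hz Hx 1 n01 HL1 y k Xy.
have t0 : 0 <= (A k.+1 - A k) / A k.+1.
  have := A0 k; have := A0 k.+1; have := Amono k => m a1 a0.
  by apply: divr_ge0; [rewrite subr_ge0 | exact: ltW].
rewrite (_ : (1 + 1 : R) = 2%:R) // !powR_mulrn ?enorm_ge0 //.
Qed.
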